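(* The sets $A^{\mathbb N}_{fs}$ and $\mathbb N^A_{fs}$ are FSM Tarski I infinite (and hence FSM Tarski III infinite).
   Context: Framework (FSM). Work in ZF with a fixed infinite set $A$ of atoms; $S_A$ is the group of bijections of $A$ fixing all but finitely many atoms, acting on $A$ by evaluation and trivially on $\mathbb N$ and $\{0,1\}$; $Fix(S)$ is the set of $\pi\in S_A$ fixing each element of $S\subseteq A$. For $S_A$-sets $X,Y$, $Y^X_{fs}$ is the set of functions $f:X\to Y$ for which there is a finite $S\subseteq A$ with $f(\pi\cdot x)=\pi\cdot f(x)$ for all $\pi\in Fix(S)$, $x\in X$; it carries the action $(\pi\cdot f)(x)=\pi\cdot f(\pi^{-1}\cdot x)$. Products carry the componentwise action. A set $X$ is FSM Tarski I infinite if there is a finitely supported bijection $X\to X\times X$, and FSM Tarski III infinite if there is a finitely supported bijection between $X$ and $\{0,1\}\times X$. *)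

(* Defs.v *)
From Stdlib Require Import List.
Import ListNotations.
Set Implicit Arguments.

(* Elements of S_A: bijections of A (given with their inverse) fixing all
   atoms outside a finite list. *)
Record perm (A : Type) := Perm {
  pfun : A -> A;
  pinv : A -> A;
  pfunK : forall a, pinv (pfun a) = a;
  pinvK : forall a, pfun (pinv a) = a;
  psupp : list A;
  psuppP : forall a, ~ In a psupp -> pfun a = a }.

Lemma perm_inv_supp (A : Type) (p : perm A) :
  forall a, ~ In a (psupp p) -> pinv p a = a.
Proof. intros a H; pose proof (pfunK p a) as E; rewrite (psuppP p a H) in E; exact E. Qed.

Definition perm_inv (A : Type) (p : perm A) : perm A :=
  @Perm A (pinv p) (pfun p) (pinvK p) (pfunK p) (psupp p) (perm_inv_supp p).

Definition fixes (A : Type) (S : list A) (p : perm A) : Prop :=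
  forall a, In a S -> pfun p a = a.

Record SAset (A : Type) := { carrier :> Type; act : perm A -> carrier -> carrier }.

Definition atoms_set (A : Type) : SAset A := {| carrier := A; act := fun p a => pfun p a |}.
Definition nat_set (A : Type) : SAset A := {| carrier := nat; act := fun _ n => n |}.
Definition two_set (A : Type) : SAset A := {| carrier := bool; act := fun _ b => b |}.
Definition prod_set (A : Type) (X Y : SAset A) : SAset A :=
  {| carrier := (carrier X * carrier Y)%type;
     act := fun p xy => (act X p (fst xy), act Y p (snd xy)) |}.
Definition fun_set (A : Type) (X Y : SAset A) : SAset A :=
  {| carrier := (carrier X -> carrier Y);
     act := fun p f x => act Y p (f (act X (perm_inv p) x)) |}.

Definition fs_map (A : Type) (X Y : SAset A) (P : carrier X -> Prop)
    (f : carrier X -> carrier Y) : Prop :=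
  exists S : list A, forall p, fixes S p -> forall x, P x ->
    f (act X p x) = act Y p (f (x)).

Definition fs_funs (A : Type) (X Y : SAset A) : carrier (fun_set X Y) -> Prop :=
  fun f => fs_map X Y (fun _ => True) f.

Definition prodP (A : Type) (X Y : SAset A) (P : carrier X -> Prop) (Q : carrier Y -> Prop)
  : carrier (prod_set X Y) -> Prop := fun xy => P (fst xy) /\ Q (snd xy).

Definition fs_bij (A : Type) (X Y : SAset A) (P : carrier X -> Prop) (Q : carrier Y -> Prop)
    (f : carrier X -> carrier Y) : Prop :=
  (forall x, P x -> Q (f x)) /\
  (forall x y, P x -> P y -> f x = f y -> x = y) /\
  (forall y, Q y -> exists x, P x /\ f x = y) /\
  fs_map X Y P f.

Definition FSM_TarskiI_infinite (A : Type) (X : SAset A) (P : carrier X -> Prop) : Prop :=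
  exists f : carrier X -> carrier (prod_set X X), fs_bij X (prod_set X X) P (prodP P P) f.

Definition FSM_TarskiIII_infinite (A : Type) (X : SAset A) (P : carrier X -> Prop) : Prop :=
  exists f : carrier X -> carrier (prod_set (two_set A) X),
    fs_bij X (prod_set (two_set A) X) P (prodP (fun _ => True) P) f.

(* Main.v *)
Require Import Defs.
From Stdlib Require Import List.
From Stdlib Require Import Classical ClassicalEpsilon FunctionalExtensionality Lia Arith Cantor.
Import ListNotations.

Definition dec (P : Prop) : {P} + {~P} := excluded_middle_informative P.

Lemma pfun_inj A (p : perm A) a b : pfun p a = pfun p b -> a = b.
Proof. intro H. rewrite <- (pfunK p a), <- (pfunK p b), H. reflexivity. Qed.

Lemma fixes_app_l A (S1 S2 : list A) p : fixes (S1 ++ S2) p -> fixes S1 p.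
Proof. intros H a Ha. apply H. apply in_or_app. auto. Qed.
Lemma fixes_app_r A (S1 S2 : list A) p : fixes (S1 ++ S2) p -> fixes S2 p.
Proof. intros H a Ha. apply H. apply in_or_app. auto. Qed.
Lemma fixes_cons A (a : A) S p : fixes (a :: S) p -> pfun p a = a /\ fixes S p.
Proof. intros H. split. apply H; left; auto. intros b Hb; apply H; right; auto. Qed.

Lemma oddiv k b : Nat.odd (2*k + Nat.b2n b) = b /\ Nat.div2 (2*k + Nat.b2n b) = k.
Proof.
  induction k as [|k [IH1 IH2]].
  - destruct b; split; reflexivity.
  - replace (2 * S k + Nat.b2n b) with (S (S (2*k + Nat.b2n b))) by lia.
    set (m := 2*k + Nat.b2n b) in *.
    split.
    + unfold Nat.odd in *. simpl. exact IH1.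
    + simpl. rewrite IH2. reflexivity.
Qed.

Lemma nat_split n : exists k b, n = 2*k + Nat.b2n b.
Proof. exists (Nat.div2 n), (Nat.odd n). apply Nat.div2_odd. Qed.

Definition ev {A} (x : nat -> A) : nat -> A := fun n => x (2*n).
Definition od {A} (x : nat -> A) : nat -> A := fun n => x (2*n + 1).
Definition inter {A} (g h : nat -> A) : nat -> A :=
  fun n => if Nat.odd n then h (Nat.div2 n) else g (Nat.div2 n).

Lemma inter_ev_od A (x : nat -> A) : inter (ev x) (od x) = x.
Proof.
  apply functional_extensionality; intro n.
  destruct (nat_split n) as [k [b ->]]. unfold inter, ev, od.
  destruct (oddiv k b) as [E1 E2]. rewrite E1, E2.
  destruct b; simpl; f_equal; lia.
Qed.

Lemma ev_inter A (g h : nat -> A) : ev (inter g h) = g.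
Proof.
  apply functional_extensionality; intro n. unfold ev, inter.
  destruct (oddiv n false) as [E1 E2]. simpl Nat.b2n in *.
  rewrite Nat.add_0_r in *. rewrite E1, E2. reflexivity.
Qed.

Lemma od_inter A (g h : nat -> A) : od (inter g h) = h.
Proof.
  apply functional_extensionality; intro n. unfold od, inter.
  destruct (oddiv n true) as [E1 E2]. simpl Nat.b2n in *.
  rewrite E1, E2. reflexivity.
Qed.

Lemma part1a A :
  @FSM_TarskiI_infinite A (fun_set (nat_set A) (atoms_set A)) (@fs_funs A (nat_set A) (atoms_set A)).
Proof.
  exists (fun x : nat -> A => (ev x, od x)).
  split; [|split; [|split]].
  - intros x [S HS]. split; exists S; intros p Hp n _; simpl in *.
    + exact (HS p Hp (2*n) I).
    + exact (HS p Hp (2*n+1) I).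
  - intros x y _ _ H. injection H as H1 H2.
    pose proof (f_equal2 inter H1 H2) as E. rewrite !inter_ev_od in E. exact E.
  - intros [g h] [[S1 H1] [S2 H2]]. simpl in *.
    exists (inter g h). split.
    + exists (S1 ++ S2). intros p Hp n _. simpl in *. unfold inter.
      destruct (Nat.odd n).
      * apply (H2 p (fixes_app_r _ S1 S2 p Hp) _ I).
      * apply (H1 p (fixes_app_l _ S1 S2 p Hp) _ I).
    + rewrite ev_inter, od_inter. reflexivity.
  - exists []. intros p _ x _. reflexivity.
Qed.

Section P1b.
Variables (A : Type) (s t : A) (Hst : s <> t).

Definition Rp (x : nat -> A) : Prop := x 0 = t.
Definition Qp (x : nat -> A) : Prop :=
  exists n, 1 <= n /\ (forall i, i < n -> x i = s) /\ x n = t.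
Definition tl (x : nat -> A) : nat -> A := fun n => x (S n).
Definition cns (a : A) (x : nat -> A) : nat -> A :=
  fun n => match n with 0 => a | S m => x m end.

Definition H3 (x : nat -> A) : bool * (nat -> A) :=
  if dec (Rp x) then (true, tl x) else if dec (Qp x) then (false, tl x) else (false, x).

Lemma Qp_head x : Qp x -> x 0 = s.
Proof. intros [n [Hn [Hi _]]]. apply Hi. lia. Qed.

Lemma Qp_tl x : Qp x -> Rp (tl x) \/ Qp (tl x).
Proof.
  intros [n [Hn [Hi Hnt]]]. destruct n as [|[|n]]; [lia| |].
  - left. exact Hnt.
  - right. exists (S n). split; [lia|]. split.
    + intros i Hi'. apply Hi. lia.
    + exact Hnt.
Qed.

Lemma ext_eq (x y : nat -> A) : x 0 = y 0 -> tl x = tl y -> x = y.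
Proof.
  intros H0 H1. apply functional_extensionality; intros [|n]; auto.
  exact (f_equal (fun f => f n) H1).
Qed.

Lemma H3_inj x y : H3 x = H3 y -> x = y.
Proof.
  unfold H3.
  destruct (dec (Rp x)) as [Rx|Rx]; destruct (dec (Rp y)) as [Ry|Ry];
  try destruct (dec (Qp x)) as [Qx|Qx]; try destruct (dec (Qp y)) as [Qy|Qy];
  intro E; injection E; clear E; intros E; try discriminate;
  first [ apply ext_eq; [unfold Rp in *; congruence | exact E]
        | apply ext_eq; [rewrite (Qp_head _ Qx), (Qp_head _ Qy); reflexivity | exact E]
        | subst y; destruct (Qp_tl _ Qx); contradiction
        | subst x; destruct (Qp_tl _ Qy); contradiction
        | exact E ].
Qed.

Lemma tl_act (p : perm A) x : tl (fun n => pfun p (x n)) = fun n => pfun p (tl x n).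
Proof. reflexivity. Qed.

Lemma Rp_act (p : perm A) x : pfun p t = t -> (Rp (fun n => pfun p (x n)) <-> Rp x).
Proof.
  intros Ht. unfold Rp. split; intro H.
  - apply (pfun_inj _ p). congruence.
  - rewrite H. exact Ht.
Qed.

Lemma Qp_act (p : perm A) x : pfun p s = s -> pfun p t = t ->
  (Qp (fun n => pfun p (x n)) <-> Qp x).
Proof.
  intros Hs Ht. unfold Qp. split; intros [n [Hn [Hi Hnt]]]; exists n; split; auto; split.
  - intros i Hi'. apply (pfun_inj _ p). rewrite Hs. auto.
  - apply (pfun_inj _ p). congruence.
  - intros i Hi'. rewrite Hi; auto.
  - rewrite Hnt. exact Ht.
Qed.

Lemma part1b :
  @FSM_TarskiIII_infinite A (fun_set (nat_set A) (atoms_set A)) (@fs_funs A (nat_set A) (atoms_set A)).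
Proof.
  exists H3. split; [|split; [|split]].
  - intros x [S HS]. split; [exact I|]. simpl in HS. unfold H3.
    destruct (dec (Rp x)); [|destruct (dec (Qp x))]; simpl.
    all: exists S; intros p Hp m _; simpl; unfold tl; first [apply (HS p Hp (Datatypes.S m) I) | apply (HS p Hp m I)].
  - intros x y _ _. apply H3_inj.
  - intros [b r] [_ [S HS]]. simpl in HS |- *. destruct b.
    + exists (cns t r). split.
      * exists (t :: S). intros p Hp [|n] _; simpl.
        -- symmetry. apply (proj1 (fixes_cons _ _ _ _ Hp)).
        -- apply (HS p (proj2 (fixes_cons _ _ _ _ Hp)) n I).
      * unfold H3. destruct (dec (Rp (cns t r))) as [_|N]; [reflexivity|].
        exfalso. apply N. reflexivity.
    + destruct (dec (Rp r \/ Qp r)) as [D|D].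
      * exists (cns s r). split.
        -- exists (s :: S). intros p Hp [|n] _; simpl.
           ++ symmetry. apply (proj1 (fixes_cons _ _ _ _ Hp)).
           ++ apply (HS p (proj2 (fixes_cons _ _ _ _ Hp)) n I).
        -- unfold H3. destruct (dec (Rp (cns s r))) as [Rr|_].
           ++ exfalso. apply Hst. exact Rr.
           ++ destruct (dec (Qp (cns s r))) as [_|N]; [reflexivity|].
              exfalso. apply N. destruct D as [D|[n [Hn [Hi Hnt]]]].
              ** exists 1. split; [lia|]. split; [|exact D].
                 intros i Hi. assert (i = 0) by lia. subst. reflexivity.
              ** exists (Datatypes.S n). split; [lia|]. split; [|exact Hnt].
                 intros [|i] Hi'; [reflexivity|]. simpl. apply Hi. lia.
      * exists r. split; [exists S; intros p Hp n _; apply (HS p Hp n I)|].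
        unfold H3. destruct (dec (Rp r)); [exfalso; auto|].
        destruct (dec (Qp r)); [exfalso; auto|]. reflexivity.
  - exists [s; t]. intros p Hp x _. simpl.
    assert (Hs : pfun p s = s) by (apply Hp; simpl; auto).
    assert (Ht : pfun p t = t) by (apply Hp; simpl; auto).
    pose proof (Rp_act p x Ht) as ER. pose proof (Qp_act p x Hs Ht) as EQ.
    unfold H3.
    destruct (dec (Rp (fun n => pfun p (x n)))) as [R1|R1];
    destruct (dec (Rp x)) as [R2|R2]; [reflexivity|exfalso; tauto|exfalso; tauto|].
    destruct (dec (Qp (fun n => pfun p (x n)))) as [Q1|Q1];
    destruct (dec (Qp x)) as [Q2|Q2]; [reflexivity|exfalso; tauto|exfalso; tauto|reflexivity].
Qed.
End P1b.

Lemma part2a A :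
  @FSM_TarskiI_infinite A (fun_set (atoms_set A) (nat_set A)) (@fs_funs A (atoms_set A) (nat_set A)).
Proof.
  exists (fun f : A -> nat => (fun a => fst (Cantor.of_nat (f a)), fun a => snd (Cantor.of_nat (f a)))).
  split; [|split; [|split]].
  - intros f [S HS]. split; exists S; intros p Hp a _; simpl in *;
      rewrite (HS p Hp a I); reflexivity.
  - intros f g _ _ E. injection E as E1 E2.
    apply functional_extensionality; intro a.
    apply Cantor.of_nat_inj.
    pose proof (f_equal (fun k => k a) E1) as F1. pose proof (f_equal (fun k => k a) E2) as F2.
    simpl in F1, F2. destruct (Cantor.of_nat (f a)), (Cantor.of_nat (g a)). simpl in *. congruence.
  - intros [g h] [[S1 H1] [S2 H2]]. simpl in *.
    exists (fun a => Cantor.to_nat (g a, h a)). split.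
    + exists (S1 ++ S2). intros p Hp a _. simpl.
      rewrite (H1 p (fixes_app_l _ S1 S2 p Hp) a I), (H2 p (fixes_app_r _ S1 S2 p Hp) a I).
      reflexivity.
    + cbn beta. f_equal; apply functional_extensionality; intro a;
        rewrite (Cantor.cancel_of_to (g a, h a)); reflexivity.
  - exists []. intros p _ f _. reflexivity.
Qed.

Lemma pinv_fix A (p : perm A) s : pfun p s = s -> pinv p s = s.
Proof. intro H. rewrite <- H at 1. apply pfunK. Qed.

Lemma part2b A (s : A) :
  @FSM_TarskiIII_infinite A (fun_set (atoms_set A) (nat_set A)) (@fs_funs A (atoms_set A) (nat_set A)).
Proof.
  exists (fun f : A -> nat => (Nat.odd (f s), fun a => if dec (a = s) then Nat.div2 (f s) else f a)).
  split; [|split; [|split]].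
  - intros f [S HS]. split; [exact I|]. exists (s :: S). intros p Hp a _. change A in a. simpl in *.
    destruct (fixes_cons _ _ _ _ Hp) as [Hs HS'].
    destruct (dec (pfun p a = s)) as [E|E]; destruct (dec (a = s)) as [E'|E'].
    + reflexivity.
    + exfalso. apply E'. apply (pfun_inj _ p). congruence.
    + exfalso. apply E. congruence.
    + apply (HS p HS' a I).
  - intros f g _ _ E. injection E as E1 E2.
    pose proof (f_equal (fun k => k s) E2) as F. simpl in F.
    destruct (dec (s = s)) as [_|N]; [|exfalso; auto].
    assert (Hs : f s = g s).
    { rewrite (Nat.div2_odd (f s)), (Nat.div2_odd (g s)), E1, F. reflexivity. }
    apply functional_extensionality; intro a. change A in a.
    pose proof (f_equal (fun k => k a) E2) as G. simpl in G.
    destruct (dec (a = s)) as [Ea|_]; [subst a; exact Hs | exact G].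
  - intros [b h] [_ [S HS]]. simpl in *.
    exists (fun a => if dec (a = s) then 2 * h s + Nat.b2n b else h a). split.
    + exists (s :: S). intros p Hp a _. change A in a. simpl.
      destruct (fixes_cons _ _ _ _ Hp) as [Hs HS'].
      destruct (dec (pfun p a = s)) as [E|E]; destruct (dec (a = s)) as [E'|E'].
      * reflexivity.
      * exfalso. apply E'. apply (pfun_inj _ p). congruence.
      * exfalso. apply E. congruence.
      * apply (HS p HS' a I).
    + destruct (dec (s = s)) as [_|N]; [|exfalso; auto].
      destruct (oddiv (h s) b) as [E1 E2]. rewrite E1. f_equal.
      apply functional_extensionality; intro a. change A in a.
      destruct (dec (a = s)) as [->|_]; auto.
  - exists [s]. intros p Hp f _. simpl.
    assert (Hs : pfun p s = s) by (apply Hp; simpl; auto).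
    pose proof (pinv_fix _ p s Hs) as Hi. rewrite Hi. f_equal.
    apply functional_extensionality; intro a. change A in a.
    destruct (dec (a = s)) as [E|E]; destruct (dec (pinv p a = s)) as [E'|E'].
    + reflexivity.
    + exfalso. apply E'. subst. exact Hi.
    + exfalso. apply E. rewrite <- (pinvK p a), E', Hs. reflexivity.
    + reflexivity.
Qed.

Theorem mainTheorem19 (A : Type) (HAinf : ~ exists l : list A, forall a : A, In a l) :
  (@FSM_TarskiI_infinite A (fun_set (nat_set A) (atoms_set A)) (@fs_funs A (nat_set A) (atoms_set A)) /\
   @FSM_TarskiIII_infinite A (fun_set (nat_set A) (atoms_set A)) (@fs_funs A (nat_set A) (atoms_set A))) /\
  (@FSM_TarskiI_infinite A (fun_set (atoms_set A) (nat_set A)) (@fs_funs A (atoms_set A) (nat_set A)) /\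
   @FSM_TarskiIII_infinite A (fun_set (atoms_set A) (nat_set A)) (@fs_funs A (atoms_set A) (nat_set A))).
Proof.
  destruct (classic (exists s : A, True)) as [[s _]|N].
  2:{ exfalso. apply HAinf. exists []. intro a. apply N. exists a. exact I. }
  destruct (classic (exists t : A, s <> t)) as [[t Hst]|N].
  2:{ exfalso. apply HAinf. exists [s]. intro a. left.
      apply NNPP. intro E. apply N. exists a. exact E. }
  split; split.
  - apply part1a.
  - apply (part1b A s t Hst).
  - apply part2a.
  - apply (part2b A s).
Qed.
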